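(* Let $\mathbb{F}$ be an arbitrary field. Let $P(t,y) \in \mathbb{F}[[t,y]]$ and $\varphi(t) \in \mathbb{F}[[t]]$ be formal power series such that $$P(t,y) = (y-\varphi(t))^e \cdot Q(t,y)$$ for some $Q \in \mathbb{F}[[t,y]]$ and some integer $e \ge 1$ that is invertible in $\mathbb{F}$. Suppose $\varphi(0)=0$ and $Q(0,0)\neq 0$. Then $$\varphi(t) = \mathcal{D}\left(\frac{y^2\cdot (\partial_y P)(ty,y)}{e\cdot P(ty,y)}\right),$$ where the quotient on the right-hand side is an element of $\mathbb{F}[[t,y]]$.
   Context: For a bivariate formal power series $F(t,y)=\sum_{i,j\ge 0}F_{i,j}t^iy^j$, the diagonal operator is $\mathcal{D}(F)(t) := \sum_{i\ge 0} F_{i,i}t^i$. Here $(\partial_y P)(ty,y)$ denotes the formal partial derivative of $P$ with respect to $y$, evaluated at $(ty,y)$. *)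

(* Defs.v *)
(* Formal power series are represented by their coefficients:
   F[[t]]   ~ nat -> F              (phi i = coefficient of t^i)
   F[[t,y]] ~ nat -> nat -> F       (A i j = coefficient of t^i y^j)
   Equality of series is coefficientwise equality. *)
From mathcomp Require Import all_boot all_order all_algebra.
Set Implicit Arguments. Unset Strict Implicit. Unset Printing Implicit Defensive.
Import GRing.Theory.
Local Open Scope ring_scope.

Section PS.
Variable F : fieldType.

Definition ps1 := nat -> F.
Definition ps2 := nat -> nat -> F.

Definition eqs2 (A B : ps2) : Prop := forall i j, A i j = B i j.

Definition mul2 (A B : ps2) : ps2 := fun i j =>
  \sum_(a < i.+1) \sum_(b < j.+1) A a b * B (i - a)%N (j - b)%N.

Definition one2 : ps2 := fun i j => if (i == 0%N) && (j == 0%N) then 1 else 0.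

Fixpoint pow2 (A : ps2) (n : nat) : ps2 :=
  match n with 0%N => one2 | n'.+1 => mul2 A (pow2 A n') end.

Definition scale2 (c : F) (A : ps2) : ps2 := fun i j => c * A i j.

Definition Y2 : ps2 := fun i j => if (i == 0%N) && (j == 1%N) then 1 else 0.

Definition y_minus (phi : ps1) : ps2 := fun i j =>
  (if (i == 0%N) && (j == 1%N) then 1 else 0) - (if j == 0%N then phi i else 0).

Definition dy2 (A : ps2) : ps2 := fun i j => (j.+1)%:R * A i j.+1.

(* substitution (t,y) |-> (ty,y):  A(ty,y) = sum A_{i,j} t^i y^(i+j) *)
Definition subst_ty (A : ps2) : ps2 := fun i j =>
  if (i <= j)%N then A i (j - i)%N else 0.

Definition diag2 (A : ps2) : ps1 := fun i => A i i.

End PS.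

(* Main.v *)
From HB Require Import structures.
From mathcomp Require Import all_boot all_order all_algebra.
From mathcomp Require Import boolp.
From mathcomp Require Import ring zify.
Require Import Defs.
Set Implicit Arguments. Unset Strict Implicit. Unset Printing Implicit Defensive.
Import GRing.Theory.
Local Open Scope ring_scope.

Definition cs (R : Type) := nat -> R.
HB.instance Definition _ (R : Type) := gen_eqMixin (cs R).
HB.instance Definition _ (R : Type) := gen_choiceMixin (cs R).

Section CZ.
Variable R : zmodType.
Definition cs_zero : cs R := fun _ => 0.
Definition cs_opp (f : cs R) : cs R := fun k => - f k.
Definition cs_add (f g : cs R) : cs R := fun k => f k + g k.
Lemma cs_addA : associative cs_add.
Proof. by move=> f g h; apply: funext => k; rewrite /cs_add addrA. Qed.
Lemma cs_addC : commutative cs_add.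
Proof. by move=> f g; apply: funext => k; rewrite /cs_add addrC. Qed.
Lemma cs_add0 : left_id cs_zero cs_add.
Proof. by move=> f; apply: funext => k; rewrite /cs_add add0r. Qed.
Lemma cs_addN : left_inverse cs_zero cs_opp cs_add.
Proof. by move=> f; apply: funext => k; rewrite /cs_add addNr. Qed.
End CZ.
HB.instance Definition _ (R : zmodType) :=
  GRing.isZmodule.Build (cs R) (@cs_addA R) (@cs_addC R) (@cs_add0 R) (@cs_addN R).

Section CR.
Variable R : comNzRingType.
Definition cs_one : cs R := fun k => if k == 0%N then 1 else 0.
Definition cs_mul (f g : cs R) : cs R := fun k => \sum_(a < k.+1) f a * g (k - a)%N.

Lemma cs_mulC : commutative cs_mul.
Proof.
move=> f g; apply: funext => k; rewrite /cs_mul.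
rewrite (reindex_inj rev_ord_inj) /=; apply: eq_bigr => i _.
by rewrite subSS subKn 1?mulrC // -ltnS.
Qed.

Lemma cs_mul1 : left_id cs_one cs_mul.
Proof.
move=> f; apply: funext => k; rewrite /cs_mul big_ord_recl /= /cs_one eqxx mul1r subn0.
by rewrite big1 ?addr0 // => i _; rewrite mul0r.
Qed.

Lemma cs_mulDl : left_distributive cs_mul (@cs_add R).
Proof.
move=> f g h; apply: funext => k; rewrite /cs_mul /cs_add -big_split /=.
by apply: eq_bigr => i _; rewrite mulrDl.
Qed.

Lemma cs_one_neq0 : cs_one != cs_zero R.
Proof. apply/eqP => /(congr1 (fun f => f 0%N)); rewrite /cs_one /cs_zero /=. exact/eqP/oner_neq0. Qed.

Lemma cs_mul_rev f g k : cs_mul f g k = \sum_(a < k.+1) f (k - a)%N * g a.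
Proof. by rewrite cs_mulC /cs_mul; apply: eq_bigr => i _; rewrite mulrC. Qed.

Lemma cs_mulA : associative cs_mul.
Proof.
move=> p q r; apply: funext => i; rewrite [RHS]cs_mul_rev /cs_mul.
transitivity (\sum_(j < i.+1) \sum_(k < i.+1 | (k <= i - j)%N) p j * (q (i - j - k)%N * r k)).
  apply: eq_bigr => /= j _; rewrite -/(cs_mul q r (i - j)%N) cs_mul_rev big_distrr /=.
  by rewrite (big_ord_narrow_leq (leq_subr _ _)).
rewrite (exchange_big_dep predT) //=; apply: eq_bigr => k _.
transitivity (\sum_(j < i.+1 | (j <= i - k)%N) p j * (q (i - j - k)%N * r k)).
  apply: eq_bigl => j; rewrite -ltnS -(ltnS j) -!subSn ?leq_ord //.
  by rewrite -subn_gt0 -(subn_gt0 j) -!subnDA addnC.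
rewrite (big_ord_narrow_leq (leq_subr _ _)) big_distrl /=.
by apply: eq_bigr => j _; rewrite -!subnDA (addnC k) mulrA.
Qed.
End CR.

HB.instance Definition _ (R : comNzRingType) :=
  GRing.Zmodule_isComNzRing.Build (cs R) (@cs_mulA R) (@cs_mulC R) (@cs_mul1 R) (@cs_mulDl R) (@cs_one_neq0 R).

Section T.
Variable R : comNzRingType.
Lemma csE (f g : cs R) k : (f * g) k = \sum_(a < k.+1) f a * g (k - a)%N.
Proof. by []. Qed.
Lemma csDE (f g : cs R) k : (f + g) k = f k + g k.
Proof. by []. Qed.
Lemma cs1E k : (1 : cs R) k = if k == 0%N then 1 else 0.
Proof. by []. Qed.
End T.

Section Inv1.
Variable R : comNzRingType.
Variables (f : cs R) (u : R).
Hypothesis hu : u * f 0%N = 1.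
Fixpoint gl (n : nat) : seq R :=
  if n is n'.+1 then rcons (gl n') (- u * \sum_(a < n'.+1) (gl n')`_a * f (n'.+1 - a)%N)
  else [:: u].
Lemma size_gl n : size (gl n) = n.+1.
Proof. by elim: n => //= n IH; rewrite size_rcons IH. Qed.
Lemma gl_stable k n m : (k <= n)%N -> (n <= m)%N -> (gl m)`_k = (gl n)`_k.
Proof.
move=> hk; elim: m => [|m IH] hm.
  by have -> : n = 0%N by apply/eqP; rewrite -leqn0.
case: (ltnP n m.+1) => h.
  by rewrite /= nth_rcons size_gl (leq_ltn_trans hk (h : n < m.+1)%N) IH.
by have -> : n = m.+1 by apply/eqP; rewrite eqn_leq hm h.
Qed.
Definition ginv : cs R := fun k => (gl k)`_k.
Lemma ginvP : ginv * f = 1.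
Proof.
apply: funext => n; rewrite csE cs1E.
case: n => [|n]; first by rewrite big_ord1 /ginv /= subn0.
rewrite big_ord_recr /= subnn /ginv /= nth_rcons size_gl ltnn eqxx.
have -> : \sum_(a < n.+1) (gl a)`_a * f (n.+1 - a)%N = \sum_(a < n.+1) (gl n)`_a * f (n.+1 - a)%N.
  apply: eq_bigr => i _; rewrite (@gl_stable i i n) //; by rewrite -ltnS.
by rewrite -mulrA (mulrC _ (f 0%N)) mulNr mulrA hu mul1r addrN.
Qed.
End Inv1.

Lemma inv1_exists (R : comNzRingType) (f : cs R) (u : R) :
  u * f 0%N = 1 -> exists g : cs R, g * f = 1.
Proof. by move=> hu; exists (ginv f u); apply: ginvP. Qed.

Section S2.
Variable F : fieldType.
Notation S2 := (cs (cs F)).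

Lemma sum_csE (R : zmodType) n (X : 'I_n -> cs R) j :
  (\sum_(a < n) X a) j = \sum_(a < n) X a j.
Proof.
by apply: (big_rec2 (fun (x : cs R) y => x j = y)) => // i x y _ <-.
Qed.

Lemma mul2E (A B : S2) i j : (A * B) i j = mul2 A B i j.
Proof.
rewrite csE sum_csE /mul2; apply: eq_bigr => a _; by rewrite csE.
Qed.

Lemma mul2S (A B : ps2 F) : mul2 A B = ((A : S2) * B : S2).
Proof. by apply: funext => i; apply: funext => j; rewrite mul2E. Qed.

Lemma one2S : one2 F = (1 : S2).
Proof.
apply: funext => i; apply: funext => j; rewrite /one2 cs1E.
by case: i => [|i] /=; rewrite ?cs1E.
Qed.

Lemma pow2S (A : ps2 F) n : pow2 A n = ((A : S2) ^+ n : S2).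
Proof. elim: n => [|n IH] /=; first by rewrite one2S expr0.
by rewrite IH mul2S exprS. Qed.

Lemma addSE (A B : S2) i j : (A + B) i j = A i j + B i j. Proof. by []. Qed.
Lemma oppSE (A : S2) i j : (- A) i j = - A i j. Proof. by []. Qed.
Lemma subSE (A B : S2) i j : (A - B) i j = A i j - B i j. Proof. by []. Qed.
Lemma zeroSE i j : (0 : S2) i j = 0. Proof. by []. Qed.
Lemma oneSE i j : (1 : S2) i j = if (i == 0%N) && (j == 0%N) then 1 else 0.
Proof. by rewrite -one2S. Qed.

Definition cst (c : F) : S2 := fun i j => if (i == 0%N) && (j == 0%N) then c else 0.

Lemma natSE n : (n%:R : S2) = cst n%:R.
Proof.
elim: n => [|n IH]; apply: funext => i; apply: funext => j.
  by rewrite /cst; case: ifP.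
rewrite -nat1r addSE IH oneSE /cst; case: ifP => _; by rewrite ?addr0 // nat1r.
Qed.

Lemma dsum_delta (n m a0 b0 : nat) (v : F) :
  \sum_(a < n) \sum_(b < m) (if (a == a0 :> nat) && (b == b0 :> nat) then v else 0)
   = if (a0 < n)%N && (b0 < m)%N then v else 0.
Proof.
rewrite (eq_bigr (fun a : 'I_n => if (a == a0 :> nat) then (if (b0 < m)%N then v else 0) else 0)).
  rewrite -big_mkcond (big_ord1_eq _ (fun=> if (b0 < m)%N then v else 0)).
  by case: (a0 < n)%N; case: (b0 < m)%N.
move=> a _; case: eqP => _ /=; last by rewrite big1.
by rewrite -big_mkcond (big_ord1_eq _ (fun=> v)).
Qed.

Lemma mulcE (c : F) (A : S2) i j : (cst c * A) i j = c * A i j.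
Proof.
rewrite mul2E /mul2.
rewrite (eq_bigr (fun a : 'I_i.+1 => \sum_(b < j.+1) (if (a == 0%N :> nat) && (b == 0%N :> nat) then c * A i j else 0))).
  by rewrite dsum_delta.
move=> a _; apply: eq_bigr => b _; rewrite /cst.
by case: eqP => [->|]; case: eqP => [->|] /=; rewrite ?subn0 ?mul0r.
Qed.

Lemma scale2S (n : nat) (A : ps2 F) : scale2 n%:R A = ((n%:R : S2) * A : S2).
Proof. by apply: funext => i; apply: funext => j; rewrite natSE mulcE. Qed.

Lemma mulYE (X : S2) i j : ((Y2 F : S2) * X) i j = if j is j'.+1 then X i j' else 0.
Proof.
rewrite mul2E /mul2.
rewrite (eq_bigr (fun a : 'I_i.+1 => \sum_(b < j.+1) (if (a == 0%N :> nat) && (b == 1%N :> nat) then X i j.-1 else 0))).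
  by rewrite dsum_delta; case: j.
move=> a _; apply: eq_bigr => b _; rewrite /Y2.
by case: eqP => [->|]; case: eqP => [->|] /=; rewrite ?subn0 ?mul0r ?mul1r ?subn1.
Qed.
End S2.

Section S3.
Variable F : fieldType.
Notation S2 := (cs (cs F)).
Definition St (A : S2) : S2 := subst_ty A.

Lemma StM (A B : S2) : St (A * B) = St A * St B.
Proof.
apply: funext => i; apply: funext => j; rewrite mul2E /mul2 /St /subst_ty.
case: (leqP i j) => hij; last first.
  rewrite big1 // => a _; rewrite big1 // => b _.
  case: ifP => h1; last by rewrite mul0r.
  case: ifP => h2; last by rewrite mulr0.
  have := ltn_ord a; have := ltn_ord b; lia.
rewrite mul2E /mul2; apply: eq_bigr => a _.
have ha : (a <= i)%N by rewrite -ltnS.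
rewrite -(big_mkord xpredT (fun c => A a c * B (i - a)%N (j - i - c)%N)).
set tm := (fun b => (if (a <= b)%N then A a (b - a)%N else 0) *
   (if (i - a <= j - b)%N then B (i - a)%N (j - b - (i - a))%N else 0)).
rewrite -(big_mkord xpredT tm).
rewrite [RHS](@big_cat_nat _ _ _ a) //=; last by lia.
rewrite [X in _ = X + _]big_nat_cond [X in _ = X + _]big1 ?add0r; last first.
  move=> b /andP[/andP[_ hb] _]; by rewrite /tm leqNgt hb mul0r.
have h := big_addn 0 j.+1 a xpredT tm; rewrite add0n in h; rewrite h {h}.
rewrite [RHS](@big_cat_nat _ _ _ (j - i).+1) //=; last by lia.
rewrite [X in _ = _ + X]big_nat_cond [X in _ = _ + X]big1 ?addr0; last first.
  move=> c /andP[/andP[hc1 hc2] _].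
  have hf : (i - a <= j - (c + a))%N = false by apply: negbTE; rewrite -ltnNge; lia.
  by rewrite /tm hf mulr0.
apply: eq_big_nat => c /andP[_ hc].
rewrite /tm leq_addl addnK ifT; last by lia.
by have -> : (j - (c + a) - (i - a) = j - i - c)%N by lia.
Qed.

Lemma StD (A B : S2) : St (A + B) = St A + St B.
Proof.
apply: funext => i; apply: funext => j; rewrite /St /subst_ty !addSE.
by case: ifP; rewrite ?addr0.
Qed.

Lemma Stcst c : St (cst c) = cst c.
Proof.
apply: funext => i; apply: funext => j; rewrite /St /subst_ty /cst.
case: (leqP i j) => h.
  by congr (if _ then _ else _); apply/idP/idP => /andP[/eqP h1 /eqP h2]; apply/andP; split; apply/eqP; lia.
by case: i h => // i; case: ifP.
Qed.

Lemma St1 : St 1 = 1.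
Proof. have h : (1 : S2) = cst 1 by have := natSE F 1; rewrite !mulr1n.
by rewrite h Stcst. Qed.

Lemma Stn n : St n%:R = n%:R.
Proof. by rewrite natSE Stcst. Qed.

Lemma StX (A : S2) n : St (A ^+ n) = St A ^+ n.
Proof. elim: n => [|n IH]; first by rewrite !expr0 St1.
by rewrite !exprS StM IH. Qed.

Definition dy (A : S2) : S2 := dy2 A.

Lemma deriv1 (f g : nat -> F) j :
  (j.+1)%:R * \sum_(b < j.+2) f b * g (j.+1 - b)%N =
  \sum_(b < j.+1) ((b.+1)%:R * f b.+1) * g (j - b)%N +
  \sum_(b < j.+1) f b * (((j - b).+1)%:R * g (j - b).+1).
Proof.
rewrite mulr_sumr.
rewrite (eq_bigr (fun b : 'I_j.+2 => b%:R * (f b * g (j.+1 - b)%N) + (j.+1 - b)%:R * (f b * g (j.+1 - b)%N))); last first.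
  move=> b _; rewrite -mulrDl -natrD subnKC //; by rewrite -ltnS.
rewrite big_split /=; congr (_ + _).
  rewrite big_ord_recl /= mul0r add0r; apply: eq_bigr => b _.
  by rewrite /bump /= add1n subSS mulrA.
rewrite big_ord_recr /= subnn mul0r addr0; apply: eq_bigr => b _ /=.
rewrite -subSn; last by rewrite -ltnS.
by rewrite mulrA (mulrC _ (f b)) mulrA.
Qed.

Lemma dyM (A B : S2) : dy (A * B) = dy A * B + A * dy B.
Proof.
apply: funext => i; apply: funext => j; rewrite addSE /dy /dy2 !mul2E /mul2.
rewrite mulr_sumr -big_split /=; apply: eq_bigr => a _.
exact: deriv1.
Qed.

Lemma dyX (A : S2) n : dy (A ^+ n.+1) = n.+1%:R * A ^+ n * dy A.
Proof.
elim: n => [|n IH]; first by rewrite expr1 expr0 mulr1 mul1r.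
rewrite exprS dyM IH exprS.
rewrite -[n.+2]addn1 natrD -nat1r. ring.
Qed.
End S3.

Section Main.
Variable F : fieldType.
Notation S2 := (cs (cs F)).
Variable phi : ps1 F.
Hypothesis phi0 : phi 0%N = 0.

Definition Psi : S2 := fun i j => if j.+1 == i then phi i else 0.
Definition Ym : S2 := y_minus phi.
Definition YY : S2 := Y2 F.

Lemma dyYm : dy Ym = 1.
Proof.
apply: funext => i; apply: funext => j; rewrite /dy /dy2 /Ym /y_minus oneSE /= subr0.
by case: j => [|j]; case: (i == 0%N); rewrite /= ?mulr1 ?mulr0 ?mulr1n.
Qed.

Lemma StYm : St Ym = YY * (1 - Psi).
Proof.
apply: funext => i; apply: funext => j; rewrite /St /subst_ty /Ym /y_minus mulYE.
case: j => [|j].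
  by case: i => [|i] //=; rewrite phi0 subrr.
rewrite subSE oneSE /Psi.
case: (leqP i j.+1) => h.
  case: i h => [|i] h /=; first by rewrite subn0.
  rewrite subSS !sub0r eqSS.
  have -> : (j - i == 0)%N = (j == i) by apply/idP/idP => /eqP hh; apply/eqP; lia.
  by [].
case: i h => [|i] h; first by [].
rewrite /=.
have -> : (j.+1 == i.+1) = false by apply/negbTE; apply/eqP; lia.
by rewrite subrr.
Qed.

Lemma inv2_exists (A : S2) : A 0%N 0%N != 0 -> exists B : S2, B * A = 1.
Proof.
move=> hA.
have [u hu] : exists u : cs F, u * A 0%N = 1.
  apply: (@inv1_exists F (A 0%N) (A 0%N 0%N)^-1); exact: mulVf.
exact: (inv1_exists hu).
Qed.

Lemma Ycancel (X : S2) : X * YY = 0 -> X = 0.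
Proof.
move=> h; apply: funext => i; apply: funext => j.
have := congr1 (fun Z : S2 => Z i j.+1) h.
by rewrite mulrC mulYE.
Qed.

Lemma Yncancel (X : S2) n : X * YY ^+ n = 0 -> X = 0.
Proof.
elim: n X => [|n IH] X; first by rewrite expr0 mulr1.
by rewrite exprSr mulrA => /Ycancel /IH.
Qed.

Lemma diagYY (W : S2) i : (YY * (YY * St W)) i i = 0.
Proof.
rewrite mulYE; case: i => [|i] //; rewrite mulYE; case: i => [|i] //.
by rewrite /St /subst_ty ifF //; apply/negbTE; rewrite -ltnNge.
Qed.

Section I1.
Variable I1 : S2.
Hypothesis hI : I1 * (1 - Psi) = 1.
Lemma I1rec i j : I1 i j = (1 : S2) i j + mul2 I1 Psi i j.
Proof.
have e : I1 = 1 + I1 * Psi by rewrite -{1}hI; ring.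
by rewrite {1}e addSE mul2E.
Qed.

Lemma I1supp i j : (i < j)%N -> I1 i j = 0.
Proof.
elim/ltn_ind: i j => i IH j hij.
rewrite I1rec oneSE ifF; last by apply/negbTE; apply/nandP; right; apply/eqP; lia.
rewrite add0r /mul2 big1 // => a _; rewrite big1 // => b _.
rewrite /Psi; case: eqP => h; last by rewrite mulr0.
have := ltn_ord a; have := ltn_ord b => hb ha.
rewrite IH ?mul0r //; lia.
Qed.

Lemma I1diag k : I1 k k = if k == 0%N then 1 else 0.
Proof.
rewrite I1rec oneSE andbb /mul2 big1 ?addr0 // => a _; rewrite big1 // => b _.
rewrite /Psi; case: eqP => h; last by rewrite mulr0.
have := ltn_ord a; have := ltn_ord b => hb ha.
rewrite I1supp ?mul0r //; lia.
Qed.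

Lemma I1off n : I1 n.+1 n = phi n.+1.
Proof.
rewrite I1rec oneSE /= add0r /mul2.
rewrite (eq_bigr (fun a : 'I_n.+2 => \sum_(b < n.+1) (if (a == 0%N :> nat) && (b == 0%N :> nat) then phi n.+1 else 0))).
  by rewrite dsum_delta.
move=> a _; apply: eq_bigr => b _.
have := ltn_ord a; have := ltn_ord b => hb ha.
rewrite /Psi; case: eqP => h.
  have hab : (a : nat) = b by lia.
  rewrite -hab I1diag; case: eqP => ha0.
    by rewrite ha0 /= mul1r subn0.
  by rewrite mul0r.
case: eqP => ha0 /=; last by rewrite mulr0.
case: eqP => hb0; last by rewrite mulr0.
exfalso; apply: h; lia.
Qed.

Lemma diagYI1 i : (YY * I1) i i = phi i.
Proof. rewrite mulYE; case: i => [|i] //; by rewrite I1off. Qed.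
End I1.
End Main.

Theorem theorem3p1 (F : fieldType) (P Q : ps2 F) (phi : ps1 F) (e : nat) :
  (1 <= e)%N ->
  e%:R != 0 :> F ->
  eqs2 P (mul2 (pow2 (y_minus phi) e) Q) ->
  phi 0%N = 0 ->
  Q 0%N 0%N != 0 ->
  (exists R : ps2 F,
      eqs2 (mul2 R (scale2 e%:R (subst_ty P)))
           (mul2 (pow2 (Y2 F) 2) (subst_ty (dy2 P)))) /\
  (forall R : ps2 F,
      eqs2 (mul2 R (scale2 e%:R (subst_ty P)))
           (mul2 (pow2 (Y2 F) 2) (subst_ty (dy2 P))) ->
      forall i, phi i = diag2 R i).
Proof.
move=> he1 he0 hP hphi hQ.
case: e he1 he0 hP => [//|k] _ he0 hP.
have Peq : (P : cs (cs F)) = Ym phi ^+ k.+1 * Q.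
  apply: funext => i; apply: funext => j; by rewrite hP mul2S pow2S.
have SP : St P = (YY F * (1 - Psi phi)) ^+ k.+1 * St Q.
  by rewrite Peq StM StX StYm.
have dP : dy P = k.+1%:R * Ym phi ^+ k * Q + Ym phi ^+ k.+1 * dy Q.
  by rewrite Peq dyM dyX dyYm mulr1.
have SdP : St (dy P) = k.+1%:R * (YY F * (1 - Psi phi)) ^+ k * St Q
                        + (YY F * (1 - Psi phi)) ^+ k.+1 * St (dy Q).
  by rewrite dP StD !StM !StX Stn StYm.
have [I1 hI1] : exists I1 : cs (cs F), I1 * (1 - Psi phi) = 1.
  apply: inv2_exists; rewrite subSE oneSE /Psi /= subr0; exact: oner_neq0.
have [Qi hQi] := inv2_exists hQ.
have hSi : St Qi * St Q = 1 by rewrite -StM hQi St1.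
set Einv := cst (k.+1%:R^-1 : F).
have hE : Einv * k.+1%:R = 1.
  apply: funext => i; apply: funext => j.
  rewrite mulcE natSE oneSE /cst; case: ifP => _; last by rewrite mulr0.
  exact: mulVf.
set R0 := YY F * I1 + Einv * (YY F * (YY F * St (dy Q * Qi))).
have key : forall R : ps2 F,
   eqs2 (mul2 R (scale2 k.+1%:R (subst_ty P))) (mul2 (pow2 (Y2 F) 2) (subst_ty (dy2 P)))
   <-> (R : cs (cs F)) * (k.+1%:R * St P) = YY F ^+ 2 * St (dy P).
  move=> R; rewrite scale2S mul2S pow2S mul2S; split => [h | h i j].
    by apply: funext => i; apply: funext => j; apply: h.
  by rewrite h.
have hR0 : R0 * (k.+1%:R * St P) = YY F ^+ 2 * St (dy P).
  rewrite SP SdP /R0 StM !exprS !exprMn.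
  set Yk := YY F ^+ k; set Pk := (1 - Psi phi) ^+ k.
  set U := St Q; set U' := St (dy Q); set Si := St Qi.
  transitivity (YY F ^+ 2 * (k.+1%:R * (Yk * Pk) * U * (I1 * (1 - Psi phi))
       + (YY F * (1 - Psi phi)) * (Yk * Pk) * U' * ((Si * U) * (Einv * k.+1%:R)))).
    ring.
  rewrite hI1 hSi hE; ring.
split; first by exists R0; apply/key.
move=> R /key hR i.
have hz : ((R : cs (cs F)) - R0) * YY F ^+ k.+1 = 0.
  transitivity (((R : cs (cs F)) * (k.+1%:R * St P) - R0 * (k.+1%:R * St P))
                  * (Einv * I1 ^+ k.+1 * St Qi)); last first.
    by rewrite hR hR0 subrr mul0r.
  rewrite SP exprMn.
  set Yn := YY F ^+ k.+1; set Pn := (1 - Psi phi) ^+ k.+1; set In := I1 ^+ k.+1.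
  have hIn : In * Pn = 1 by rewrite /In /Pn -exprMn hI1 expr1n.
  transitivity (((R : cs (cs F)) - R0) * Yn * ((In * Pn) * (St Qi * St Q) * (Einv * k.+1%:R))).
    by rewrite hIn hSi hE !mulr1.
  ring.
move/Yncancel/eqP: hz; rewrite subr_eq0 => /eqP hRR.
by rewrite /diag2 hRR /R0 addSE (diagYI1 hphi hI1) mulcE diagYY mulr0 addr0.
Qed.
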